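(* Let $\theta,w\in\mathbb{R}^p$ and $\eta=\theta+w$, and for $c\in\mathbb{R}$ let $\eta(c)=\bar\eta+c(\eta-\bar\eta)$. Assume $\mathrm{var}(\eta)>0$, $\bar\theta\neq0$ and $\bar\eta\neq0$. Then the minimizer over $c\in\mathbb{R}$ of $\mathrm{MSE}(\eta(c),\theta)$ is $$c^{\mathrm{MSE}}=\frac{\mathrm{cov}(\theta,\eta)}{\mathrm{var}(\eta)},$$ and the minimizer over $c\in\mathbb{R}$ of $\mathrm{SPH}(\eta(c),\theta)$ is $$c^{\mathrm{SPH}}=\frac{\bar\eta}{\bar\theta}\,c^{\mathrm{MSE}}.$$
   Context: For $u,v\in\mathbb{R}^p$: $\bar u=\frac1p\sum_i u_i$, $\mathrm{var}(u)=\frac1p\sum_i(u_i-\bar u)^2$, $\mathrm{cov}(u,v)=\frac1p\sum_i(u_i-\bar u)(v_i-\bar v)$; for $x\in\mathbb{R}$, $u-x$ and $x+u$ are componentwise. $\mathrm{MSE}(u,\theta)=\langle u-\theta,u-\theta\rangle/p$, and for nonzero $u,\theta$, $\mathrm{SPH}(u,\theta)=1-\left(\frac{\langle u,\theta\rangle}{|u||\theta|}\right)^2$. *)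

(* Defs.v *)
From mathcomp Require Import all_boot all_order all_algebra.
Set Implicit Arguments. Unset Strict Implicit. Unset Printing Implicit Defensive.
Import Order.TTheory GRing.Theory Num.Theory.
Local Open Scope ring_scope.

Section Defs.
Variables (R : rcfType) (p : nat).
Definition vec := 'I_p -> R.

Definition mean (u : vec) : R := (\sum_(i < p) u i) / p%:R.
Definition var (u : vec) : R := (\sum_(i < p) (u i - mean u) ^+ 2) / p%:R.
Definition cov (u v : vec) : R :=
  (\sum_(i < p) (u i - mean u) * (v i - mean v)) / p%:R.
Definition dotp (u v : vec) : R := \sum_(i < p) u i * v i.
Definition vnorm (u : vec) : R := Num.sqrt (dotp u u).
Definition MSE (u theta : vec) : R :=
  dotp (fun i => u i - theta i) (fun i => u i - theta i) / p%:R.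
Definition SPH (u theta : vec) : R :=
  1 - (dotp u theta / (vnorm u * vnorm theta)) ^+ 2.
Definition shrink (eta : vec) (c : R) : vec :=
  fun i => mean eta + c * (eta i - mean eta).
End Defs.

(* Main.v *)
Require Import Defs.
From mathcomp Require Import all_boot all_order all_algebra.
From mathcomp Require Import ring lra.
Import Order.TTheory GRing.Theory Num.Theory.
Local Open Scope ring_scope.

Lemma sum4 (R : rcfType) (p : nat) (F G H K : 'I_p -> R) (a b c e : R) :
  \sum_(i < p) (a * F i + b * G i + c * H i + e * K i) =
  a * \sum_(i < p) F i + b * \sum_(i < p) G i + c * \sum_(i < p) H i
  + e * \sum_(i < p) K i.
Proof. by rewrite !big_split /= !mulr_sumr. Qed.

Lemma sum2 (R : rcfType) (p : nat) (F G : 'I_p -> R) (a b : R) :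
  \sum_(i < p) (a * F i + b * G i) =
  a * \sum_(i < p) F i + b * \sum_(i < p) G i.
Proof. by rewrite !big_split /= !mulr_sumr. Qed.

Theorem lemma1 (R : rcfType) (p : nat) (theta w : 'I_p -> R) :
  let eta := fun i => theta i + w i in
  0 < var eta -> mean theta != 0 -> mean eta != 0 ->
  let cMSE := cov theta eta / var eta in
  let cSPH := mean eta / mean theta * cMSE in
  ((forall c : R, MSE (shrink eta cMSE) theta <= MSE (shrink eta c) theta) /\
   (forall c : R, (forall c' : R, MSE (shrink eta c) theta <= MSE (shrink eta c') theta) ->
      c = cMSE)) /\
  ((forall c : R, SPH (shrink eta cSPH) theta <= SPH (shrink eta c) theta) /\
   (forall c : R, (forall c' : R, SPH (shrink eta c) theta <= SPH (shrink eta c') theta) ->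
      c = cSPH)).
Proof.
move=> eta Hv Ht He.
have pn : p%:R != 0 :> R.
  apply/negP => /eqP p0; move: Hv; rewrite /var p0 invr0 mulr0 ltxx //.
have sd : \sum_(i < p) (eta i - mean eta) = 0.
  by rewrite sumrB sumr_const card_ord /mean -[X in _ - X]mulr_natr divfK // subrr.
have sdd : \sum_(i < p) (eta i - mean eta) ^+ 2 = p%:R * var eta.
  by rewrite /var mulrC divfK.
have sth : \sum_(i < p) theta i = p%:R * mean theta.
  by rewrite /mean mulrC divfK.
have std : \sum_(i < p) theta i * (eta i - mean eta) = p%:R * cov theta eta.
  rewrite /cov mulrC divfK //; symmetry.
  rewrite (eq_bigr (fun i => 1 * (theta i * (eta i - mean eta)) +
     (- mean theta) * (eta i - mean eta))); last by move=> i _; ring.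
  by rewrite sum2 sd mulr0 addr0 mul1r.
set m := mean eta in He sd sdd std *.
set t := mean theta in Ht sth std *.
set V := var eta in Hv sdd *.
set C := cov theta eta in std *.
set N := dotp theta theta.
have V0 : V != 0 by rewrite gt_eqF.
have Npos : 0 < N.
  rewrite lt_def sumr_ge0 ?andbT; last by move=> i _; rewrite -expr2 sqr_ge0.
  apply/negP => /eqP N0; move/negP: Ht; apply; apply/eqP.
  have th0 : forall i, theta i = 0.
    move=> i; have := @psumr_eq0P R _ xpredT (fun i => theta i * theta i).
    move=> h; have := h (fun i _ => (sqr_ge0 (theta i))) N0 i isT.
    by move/eqP; rewrite mulf_eq0 orbb => /eqP.
  rewrite /t /mean big1 ?mul0r // => i _; exact: th0.
have N0 : N != 0 by rewrite gt_eqF.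
set A := \sum_(i < p) (m - theta i) ^+ 2.
move=> cM cS.
have shE : forall c, shrink eta c = fun i => m + c * (eta i - m) by [].
have NE : dotp theta theta = N by [].
clearbody m t V C N.
have hM : forall c, MSE (shrink eta c) theta = (A - 2 * c * (p%:R * C) + c ^+ 2 * (p%:R * V)) / p%:R.
  move=> c; rewrite /MSE /dotp shE.
  rewrite (eq_bigr (fun i => 1 * (m - theta i) ^+ 2 + (2 * c * m) * (eta i - m)
     + (- 2 * c) * (theta i * (eta i - m)) + c ^+ 2 * (eta i - m) ^+ 2));
     last by move=> i _; rewrite /=; ring.
  by rewrite sum4 sd std sdd -/A; field.
have dM : forall c, MSE (shrink eta c) theta - MSE (shrink eta cM) theta = V * (c - cM) ^+ 2.
  by move=> c; rewrite !hM /cM; field; rewrite pn V0.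
split; [split|].
- by move=> c; rewrite -subr_ge0 dM mulr_ge0 ?sqr_ge0 // ltW.
- move=> c H; have := H cM; rewrite -subr_le0 dM => H1.
  have : V * (c - cM) ^+ 2 = 0 by apply/eqP; rewrite eq_le H1 mulr_ge0 ?sqr_ge0 // ltW.
  by move/eqP; rewrite mulf_eq0 (negbTE V0) /= sqrf_eq0 subr_eq0 => /eqP.
have den : forall c, 0 < m ^+ 2 + c ^+ 2 * V.
  move=> c; apply: (@lt_le_trans _ _ (m ^+ 2)); first by rewrite lt_def sqrf_eq0 He sqr_ge0.
  by rewrite lerDl mulr_ge0 ?sqr_ge0 ?ltW.
have hS : forall c, SPH (shrink eta c) theta = 1 - p%:R * (m * t + c * C) ^+ 2 / ((m ^+ 2 + c ^+ 2 * V) * N).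
  move=> c; rewrite /SPH /vnorm NE.
  have -> : dotp (shrink eta c) theta = p%:R * (m * t + c * C).
    rewrite /dotp shE.
    rewrite (eq_bigr (fun i => m * theta i + c * (theta i * (eta i - m))));
      last by move=> i _; ring.
    by rewrite sum2 sth std; ring.
  have -> : dotp (shrink eta c) (shrink eta c) = p%:R * (m ^+ 2 + c ^+ 2 * V).
    rewrite /dotp shE.
    rewrite (eq_bigr (fun i => m ^+ 2 * 1 + (2 * c * m) * (eta i - m)
      + 0 * 0 + c ^+ 2 * (eta i - m) ^+ 2)); last by move=> i _; ring.
    rewrite sum4 sd sdd sumr_const card_ord; ring.
  rewrite expr_div_n !exprMn !sqr_sqrtr ?(ltW Npos) ?mulr_ge0 ?ler0n ?(ltW (den c)) //.
  congr (_ - _); field; by rewrite pn N0 gt_eqF ?den.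
have dS : forall c, SPH (shrink eta c) theta - SPH (shrink eta cS) theta =
    p%:R * (m * C - c * V * t) ^+ 2 / (V * (m ^+ 2 + c ^+ 2 * V) * N).
  move=> c; rewrite !hS /cS /cM ; field.
  have sq_pos : forall x : R, x != 0 -> 0 < x ^+ 2.
    by move=> x hx; rewrite lt_def sqrf_eq0 hx sqr_ge0.
  have pos : 0 < m ^+ 2 * (t ^+ 2 * V) + (m * C) ^+ 2.
    apply: (@lt_le_trans _ _ (m ^+ 2 * (t ^+ 2 * V))).
      by apply: mulr_gt0; [exact: sq_pos | apply: mulr_gt0 => //; exact: sq_pos].
    by rewrite lerDl sqr_ge0.
  by rewrite N0 V0 Ht (gt_eqF (den c)) (gt_eqF pos).
split.
- have dpos : forall c, 0 <= p%:R * (m * C - c * V * t) ^+ 2 / (V * (m ^+ 2 + c ^+ 2 * V) * N).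
    move=> c; apply: divr_ge0; first by apply: mulr_ge0; [apply: ler0n | apply: sqr_ge0].
    by apply: ltW; apply: mulr_gt0; [apply: mulr_gt0 => //; apply: den | done].
  move=> c; by rewrite -subr_ge0 dS.
- move=> c H; have := H cS; rewrite -subr_le0 dS => H1.
  have : p%:R * (m * C - c * V * t) ^+ 2 / (V * (m ^+ 2 + c ^+ 2 * V) * N) = 0.
    apply/eqP; rewrite eq_le H1 /=.
    apply: divr_ge0; first by apply: mulr_ge0; [apply: ler0n | apply: sqr_ge0].
    by apply: ltW; apply: mulr_gt0; [apply: mulr_gt0 => //; apply: den | done].
  move/eqP; rewrite !mulf_eq0 invr_eq0 !mulf_eq0 (negbTE pn) (negbTE V0) (negbTE N0).
  rewrite (gt_eqF (den c)) /= orbF orbb subr_eq0 => /eqP E.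
  have -> : c = c * V * t / (V * t) by field; rewrite V0 Ht.
  rewrite -E /cS /cM; field; by rewrite V0 Ht.
Qed.
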